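(* Let $G$ be ${\mathbb Z}_{\geq 0}$ or ${\mathbb Z}$. Let $X,Y$ be compact Hausdorff spaces and $T:X\to X$, $S:Y\to Y$ surjective continuous maps (homeomorphisms if $G={\mathbb Z}$). Then for every $k\in{\mathbb N}$, \[{\rm IE}_k(X\times Y,T\times S)={\rm IE}_k(X,T)\times{\rm IE}_k(Y,S),\] where $(X\times Y)^k$ is identified with $X^k\times Y^k$ in the natural way.
   Context: For a compact Hausdorff space $Z$ with surjective continuous map $R$ and $G$ acting by $n\cdot z=R^nz$: for a tuple $(A_1,\dots,A_k)$ of subsets of $Z$, a set $J\subseteq G$ is an independence set if for every nonempty finite $I\subseteq J$ and every $\sigma:I\to\{1,\dots,k\}$, $\bigcap_{s\in I}R^{-s}A_{\sigma(s)}\neq\emptyset$. A set $I\subseteq{\mathbb Z}$ has positive density if $\lim_{n}|I\cap\{-n,\dots,n\}|/(2n+1)$ exists and is nonzero; $I\subseteq{\mathbb Z}_{\ge0}$ has positive density if $\lim_n|I\cap\{0,\dots,n\}|/(n+1)$ exists and is nonzero. ${\rm IE}_k(Z,R)$ is the set of tuples $(z_1,\dots,z_k)\in Z^k$ such that for every product neighbourhood $U_1\times\cdots\times U_k$ of it, $(U_1,\dots,U_k)$ has an independence set of positive density. *)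

(* Defs.v *)
From HB Require Import structures.
From mathcomp Require Import all_boot all_order all_algebra.
From mathcomp Require Import all_classical all_reals all_analysis.
From mathcomp Require Import Rstruct Rstruct_topology.
Set Implicit Arguments. Unset Strict Implicit. Unset Printing Implicit Defensive.
Import Order.TTheory GRing.Theory Num.Theory.
Local Open Scope classical_set_scope.
Local Open Scope ring_scope.

(* The acting group G is Z (isZ = true) or Z_{>=0} (isZ = false),
   both viewed as subsets of int. *)
Definition inG (isZ : bool) : set int := fun n => isZ \/ (0 <= n).

(* R^{-s} A := the preimage of A under R^s, for s : int.  For s >= 0 it is
   the preimage under the s-th iterate; for s < 0 (only used when R is a
   bijection, G = Z) R^s = (R^{-1})^{|s|}, whose preimage of A is R^{|s|}(A). *)
Definition preim_pow (Z : Type) (R : Z -> Z) (s : int) (A : set Z) : set Z :=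
  if 0 <= s then (iter `|s|%N R) @^-1` A else (iter `|s|%N R) @` A.

Definition indep_set (isZ : bool) (Z : Type) (R : Z -> Z) (k : nat)
  (A : 'I_k -> set Z) (J : set int) : Prop :=
  J `<=` inG isZ /\
  forall (I : seq int) (sigma : int -> 'I_k),
    I != [::] -> {subset I <= J} ->
    exists z : Z, forall s, s \in I -> preim_pow R s (A (sigma s)) z.

Definition density_seq (isZ : bool) (I : set int) (n : nat) : Rdefinitions.R :=
  if isZ then
    (\sum_(i < (2 * n).+1) (`[< I ((i%:Z - n%:Z)%R) >] : nat))%:R / ((2 * n).+1)%:R
  else
    (\sum_(i < n.+1) (`[< I i%:Z >] : nat))%:R / (n.+1)%:R.

Definition pos_density (isZ : bool) (I : set int) : Prop :=
  I `<=` inG isZ /\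
  exists l : Rdefinitions.R, density_seq isZ I n @[n --> \oo] --> l /\ l != 0.

Definition IE (isZ : bool) (Z : topologicalType) (R : Z -> Z) (k : nat) :
  set ('I_k -> Z) :=
  fun z => forall U : 'I_k -> set Z, (forall i, nbhs (z i) (U i)) ->
    exists J, indep_set isZ R U J /\ pos_density isZ J.

Definition system (isZ : bool) (Z : topologicalType) (R : Z -> Z) : Prop :=
  [/\ hausdorff_space Z, compact [set: Z], continuous R,
      (forall y, exists x, R x = y) &
      (isZ -> exists Rinv : Z -> Z,
          [/\ cancel R Rinv, cancel Rinv R & continuous Rinv])].
Arguments IE isZ {Z} R k _.

(* Main.v *)
Require Import Defs.
From HB Require Import structures.
From mathcomp Require Import all_boot all_order all_algebra.
From mathcomp Require Import all_classical all_reals all_analysis.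
From mathcomp Require Import Rstruct Rstruct_topology.
From mathcomp Require Import zify ring lra.
Set Implicit Arguments. Unset Strict Implicit. Unset Printing Implicit Defensive.
Import Order.TTheory GRing.Theory Num.Theory.
Import numFieldNormedType.Exports.
Local Open Scope classical_set_scope.
Definition cnt (P : nat -> bool) (n : nat) : nat := (\sum_(i < n) (P i : nat))%N.

Lemma cnt_le P n : (cnt P n <= n)%N.
Proof.
rewrite /cnt; apply: leq_trans (_ : (\sum_(i < n) 1 <= n)%N).
  by apply: leq_sum => i _; case: (P i).
by rewrite sum1_card card_ord.
Qed.

Lemma cnt_split P m n : cnt P (m + n) = (cnt P m + cnt (fun i => P (m + i)) n)%N.
Proof. by rewrite /cnt big_split_ord. Qed.

Lemma cnt_ext P Q n : (forall i, (i < n)%N -> P i = Q i) -> cnt P n = cnt Q n.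
Proof. by move=> H; rewrite /cnt; apply: eq_bigr => i _; rewrite H. Qed.

Lemma cnt_mono P m n : (m <= n)%N -> (cnt P m <= cnt P n)%N.
Proof. by move=> /subnKC <-; rewrite cnt_split leq_addr. Qed.

Lemma cnt_restr P n : cnt (fun i => P i && (i < n)%N) n = cnt P n.
Proof. by apply: cnt_ext => i ->; rewrite andbT. Qed.

Lemma cnt_sub (P Q : nat -> bool) n : (forall i, P i -> Q i) -> (cnt P n <= cnt Q n)%N.
Proof.
move=> H; rewrite /cnt; apply: leq_sum => i _.
by case E: (P i); rewrite ?(H _ E).
Qed.

Definition agree (p q : nat -> bool) n := forall i, (i < n)%N -> p i = q i.

Lemma koenig (P : nat -> nat -> bool) :
  exists J : nat -> bool, forall n j0, exists j, (j0 <= j)%N /\ agree (P j) J n.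
Proof.
pose good n (s : nat -> bool) := forall j0, exists j, (j0 <= j)%N /\ agree (P j) s n.
pose ext (s : nat -> bool) n (b : bool) := fun i => if (i < n)%N then s i else b.
have step n s : good n s -> good n.+1 (ext s n true) \/ good n.+1 (ext s n false).
  move=> g; case: (EM (good n.+1 (ext s n true))) => [?|]; first by left.
  move=> /existsNP [j1 /forallNP H1].
  case: (EM (good n.+1 (ext s n false))) => [?|]; first by right.
  move=> /existsNP [j2 /forallNP H2]; exfalso.
  have [j [hj ag]] := g (maxn j1 j2).
  case E: (P j n).
  - apply: (H1 j); split; first by apply: leq_trans hj; exact: leq_maxl.
    move=> i; rewrite ltnS leq_eqVlt => /orP [/eqP ->|lt]; first by rewrite /ext ltnn.
    by rewrite /ext lt ag.
  - apply: (H2 j); split; first by apply: leq_trans hj; exact: leq_maxr.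
    move=> i; rewrite ltnS leq_eqVlt => /orP [/eqP ->|lt]; first by rewrite /ext ltnn.
    by rewrite /ext lt ag.
pose pre := fix pre n := match n with
  | 0 => fun _ : nat => false
  | n'.+1 => ext (pre n') n' `[< good n'.+1 (ext (pre n') n' true) >] end.
have gpre n : good n (pre n).
  elim: n => [|n IH] /=.
    by move=> j0; exists j0; split => // i.
  case: (asboolP (good n.+1 (ext (pre n) n true))) => // ng.
  by case: (step _ _ IH).
have preS n i : (i < n)%N -> pre n.+1 i = pre n i by move=> lt; rewrite /= /ext lt.
have preK n m i : (i < n)%N -> (n <= m)%N -> pre m i = pre n i.
  move=> lt /subnKC <-; elim: (m - n)%N => [|d IH]; first by rewrite addn0.
  by rewrite addnS preS ?IH //; apply: leq_trans (leq_addr _ _).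
exists (fun i => pre i.+1 i) => n j0.
have [j [hj ag]] := gpre n j0; exists j; split => // i lt.
by rewrite ag // (preK i.+1 n).
Qed.
Local Open Scope ring_scope.
Notation RR := Rdefinitions.R.

Lemma archi_nat (x : RR) : exists t : nat, x < t%:R.
Proof. by exists (Num.Def.trunc x).+1; apply: truncnS_gt. Qed.

Definition goodOk (Ok : (nat -> bool) -> Prop) :=
  [/\ (forall P Q : nat -> bool, Ok P -> (forall i, Q i -> P i) -> Ok Q),
      (forall P b, Ok P -> Ok (fun i => P (b + i)%N)) &
      (forall P, (forall n, Ok (fun i => P i && (i < n)%N)) -> Ok P)].

Definition Dense (Ok : (nat -> bool) -> Prop) :=
  exists d m0, (0 < d)%N /\ forall m, (m0 <= m)%N ->
    exists P, Ok P /\ (forall i, P i -> (i < m)%N) /\ (m <= d * cnt P m)%N.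

Lemma core Ok : goodOk Ok -> Dense Ok ->
  exists J, Ok J /\ exists I : RR, 0 < I /\
   (forall n, I * n%:R <= (cnt J n)%:R) /\
   (forall e, 0 < e -> exists N, forall n, (N <= n)%N -> (cnt J n)%:R <= (I + e) * n%:R).
Proof.
case=> Hsub Hsh Hfin [d [m0 [d0 Hd]]].
pose S n k := exists P, Ok P /\ (forall i, P i -> (i < n)%N) /\ cnt P n = k.
have Ok0 : Ok (fun _ => false).
  have [P [OP _]] := Hd m0 (leqnn _); exact: Hsub OP _.
have Hmax n : exists k, S n k /\ forall k', S n k' -> (k' <= k)%N.
  have hex : exists k, `[< S n k >].
    exists 0%N; apply/asboolP; exists (fun _ => false); split => //; split => //.
    by rewrite /cnt big1.
  have hub : forall k, `[< S n k >] -> (k <= n)%N.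
    by move=> k /asboolP [P [_ [_ <-]]]; exact: cnt_le.
  case: (ex_maxnP hex hub) => k /asboolP Sk Hk; exists k; split => // k' Sk'.
  by apply: Hk; apply/asboolP.
have [a Ha] := choice Hmax.
have restr P n : Ok P -> (cnt P n <= a n)%N.
  move=> OP; apply: (Ha n).2; exists (fun i => P i && (i < n)%N); split.
    by apply: Hsub OP _ => i /andP[].
  by split; [move=> i /andP[] | exact: cnt_restr].
have split3 P n N : Ok P -> (n <= N)%N -> (cnt P N <= cnt P n + a (N - n))%N.
  move=> OP le; have := cnt_split P n (N - n); rewrite subnKC // => ->.
  by rewrite leq_add2l; apply: restr; exact: Hsh.
have subadd m n : (a (m + n) <= a m + a n)%N.
  have [P [OP [_ cP]]] := (Ha (m + n)%N).1; rewrite -cP.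
  apply: leq_trans (split3 P m (m + n)%N OP (leq_addr _ _)) _.
  by rewrite addKn leq_add2r; exact: restr.
have ale n : (a n <= n)%N.
  by have [P [_ [_ <-]]] := (Ha n).1; exact: cnt_le.
have mult q m : (a (q * m) <= q * a m)%N.
  elim: q => [|q IH]; first by rewrite mul0n; have := ale 0%N; rewrite leqn0 => /eqP ->.
  by rewrite !mulSn; apply: leq_trans (subadd _ _) _; rewrite leq_add2l.
have lower m : (0 < m)%N -> (m <= d * a m)%N.
  move=> m0p; have [P [OP [_ hP]]] := Hd (m0.+1 * m)%N (ltnW (leq_pmulr _ m0p)).
  have h1 := leq_trans hP (leq_mul (leqnn d) (restr P _ OP)).
  have h2 := leq_trans h1 (leq_mul (leqnn d) (mult m0.+1 m)).
  by rewrite mulnCA leq_pmul2l in h2.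
have divb m n : (0 < m)%N -> (a n <= (n %/ m) * a m + m)%N.
  move=> mp; rewrite {1}(divn_eq n m).
  apply: leq_trans (subadd _ _) _; apply: leq_add; first exact: mult.
  by apply: leq_trans (ale _) _; apply: ltnW; rewrite ltn_mod.
pose E := [set x : RR | exists2 n, (0 < n)%N & x = (a n)%:R / n%:R].
pose I := inf E.
have E1 : E ((a 1%N)%:R / 1%:R) by exists 1%N.
have Elb : has_lbound E.
  exists 0 => x [n _ ->]; exact: divr_ge0.
have HI1 n : (0 < n)%N -> I <= (a n)%:R / n%:R.
  by move=> np; apply: (ge_inf Elb); exists n.
have HIa n : I * n%:R <= (a n)%:R.
  case: n => [|n]; first by rewrite mulr0.
  by rewrite -ler_pdivlMr ?ltr0n //; apply: HI1.
have HIpos : d%:R^-1 <= I.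
  apply: lb_le_inf; first by exists ((a 1%N)%:R / 1%:R).
  move=> x [n np ->]; rewrite ler_pdivlMr ?ltr0n // mulrC ler_pdivrMr ?ltr0n //.
  by rewrite -natrM ler_nat mulnC lower.
have Ipos : 0 < I.
  by apply: lt_le_trans HIpos; rewrite invr_gt0 ltr0n.
have Hup e : 0 < e -> exists N, forall n, (N <= n)%N -> (a n)%:R <= (I + e) * n%:R.
  move=> e0.
  have e20 : 0 < e / 2 by rewrite divr_gt0.
  have [y [m mp ->] hy] := inf_adherent e20 (conj (ex_intro _ _ E1) Elb).
  rewrite -/I in hy.
  have ham : (a m)%:R <= (I + e / 2) * m%:R.
    by rewrite -ler_pdivrMr ?ltr0n // ltW.
  have [t ht] := archi_nat (2 * m%:R / e).
  exists t => n tn.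
  have := divb m n mp; rewrite -(ler_nat RR) natrD natrM => h.
  apply: le_trans h _.
  have hq : ((n %/ m)%N%:R * m%:R <= n%:R :> RR).
    by rewrite -natrM ler_nat leq_trunc_div.
  have hmn : (m%:R <= e / 2 * n%:R :> RR).
    have : 2 * m%:R / e < n%:R by apply: lt_le_trans ht _; rewrite ler_nat.
    rewrite ltr_pdivrMr // => h'.
    lra.
  have Ie : 0 <= I + e / 2 by rewrite addr_ge0 // ltW // divr_gt0.
  have := ler_wpM2l (ler0n _ (n %/ m)%N) ham.
  have := ler_wpM2l Ie hq.
  move: hmn; set q := (n %/ m)%N%:R; set A := (a m)%:R.
  move=> h3 h4 h5; nra.
have record (j B : nat) : exists N, (B <= N)%N /\ forall n, (n <= N)%N ->
    (I - j.+1%:R^-1) * n%:R <= (a N)%:R - (a (N - n)%N)%:R.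
  set eps := j.+1%:R^-1.
  have e0 : 0 < eps by rewrite invr_gt0 ltr0n.
  have e1 : eps <= 1 by rewrite invf_le1 ?ler1n ?ltr0n.
  pose h m := (a m)%:R - (I - eps) * m%:R.
  have amax M : exists N, (N <= M)%N /\ forall m, (m <= M)%N -> h m <= h N.
    elim: M => [|M [N [NM HN]]].
      by exists 0%N; split => // m; rewrite leqn0 => /eqP ->.
    case: (leP (h N) (h M.+1)) => hh.
    - exists M.+1; split => // m; rewrite leq_eqVlt => /orP[/eqP ->//|].
      by rewrite ltnS => /HN hm; apply: le_trans hm hh.
    - exists N; split; first exact: leqW.
      move=> m; rewrite leq_eqVlt => /orP[/eqP ->|]; first exact: ltW.
      by rewrite ltnS; exact: HN.
  pose M := (2 * B * j.+1)%N.
  have [N [NM HN]] := amax M.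
  have epsM : eps * M%:R = 2 * B%:R.
    by rewrite /M !natrM mulrC -mulrA /eps mulrA mulfK // pnatr_eq0.
  have hM : 2 * B%:R <= h M.
    have := HIa M; rewrite /h; lra.
  exists N; split.
    rewrite leqNgt; apply/negP => NB.
    have hN : h N < 2 * B%:R.
      have h1 : (a N)%:R <= N%:R :> RR by rewrite ler_nat.
      have h2 : N%:R < B%:R :> RR by rewrite ltr_nat.
      have h3 : 0 <= I * N%:R by rewrite mulr_ge0 // ltW.
      have h4 : eps * N%:R <= N%:R by rewrite ler_piMl ?ler0n // ltW.
      rewrite /h; lra.
    have := HN M (leqnn _); lra.
  move=> n nN; have := HN (N - n)%N (leq_trans (leq_subr _ _) NM).
  rewrite /h natrB //; lra.
have Hseq j : exists p : (nat -> bool) * nat, (j <= p.2)%N /\ Ok p.1 /\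
    forall n, (n <= p.2)%N -> (I - j.+1%:R^-1) * n%:R <= (cnt p.1 n)%:R.
  have [N [jN HN]] := record j j.
  have [P [OP [_ cP]]] := (Ha N).1.
  exists (P, N); split => //; split => // n nN.
  apply: le_trans (HN n nN) _.
  by have := split3 P n N OP nN; rewrite -(ler_nat RR) natrD cP => h; lra.
have [f Hf] := choice Hseq.
have [J HJ] := koenig (fun j => (f j).1).
exists J.
have OkJr n : Ok (fun i => J i && (i < n)%N).
  have [j [_ ag]] := HJ n 0%N.
  by apply: Hsub (Hf j).2.1 _ => i /andP [Ji lt]; rewrite ag.
have OkJ := Hfin _ OkJr.
split => //; exists I; split => //; split.
- move=> n; apply/ler_addgt0Pr => e e0.
  have [t ht] := archi_nat (n%:R / e).
  have [j [jt ag]] := HJ n (maxn t n).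
  have [jN [_ Hc]] := Hf j.
  have nN : (n <= (f j).2)%N.
    by apply: leq_trans jN; apply: leq_trans jt; exact: leq_maxr.
  have := Hc n nN; rewrite (cnt_ext ag) => hc.
  have tj : (t%:R <= j.+1%:R :> RR).
    rewrite ler_nat; apply: leq_trans (leqnSn _); apply: leq_trans jt; exact: leq_maxl.
  have hn : n%:R < t%:R * e by rewrite -ltr_pdivrMr.
  have hinv : j.+1%:R^-1 * n%:R <= e.
    rewrite mulrC ler_pdivrMr ?ltr0n //.
    apply: ltW; apply: lt_le_trans hn _; rewrite mulrC ler_wpM2l // ltW //.
  rewrite mulrBl in hc; apply: le_trans (_ : _ <= (cnt J n)%:R + j.+1%:R^-1 * n%:R) _; [by rewrite -lerBlDr | by rewrite lerD2l].
- move=> e e0; have [N HN] := Hup e e0; exists N => n nN.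
  by apply: le_trans (HN n nN); rewrite ler_nat; exact: restr.
Qed.
Lemma epsN_cvg (u : nat -> RR) (l : RR) :
  (forall e, 0 < e -> exists N, forall n, (N <= n)%N -> `|l - u n| <= e) ->
  u n @[n --> \oo] --> l.
Proof.
move=> H; apply/(@cvgrPdist_le _ (RR^o)) => e e0.
by have [N HN] := H e e0; exists N.
Qed.

Lemma dist_le (a v e : RR) : v <= a + e -> a <= v -> `|a - v| <= e.
Proof. by move=> h1 h2; rewrite ler_norml; apply/andP; split; lra. Qed.

Definition Jint (J : nat -> bool) : set int := fun z => (0 <= z)%R /\ J (absz z).

Lemma asb_Jint J (i : nat) : (`[< Jint J i%:Z >] : nat) = J i.
Proof.
case E: (J i).
  by rewrite asboolT //; split.
by rewrite asboolF // => -[_]; rewrite /= E.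
Qed.

Lemma sumF J n : (\sum_(i < n.+1) (`[< Jint J i%:Z >] : nat))%N = cnt J n.+1.
Proof. by apply: eq_bigr => i _; rewrite asb_Jint. Qed.

Lemma sumT J n :
  (\sum_(i < (2 * n).+1) (`[< Jint J ((i%:Z - n%:Z)%R) >] : nat))%N = cnt J n.+1.
Proof.
rewrite (_ : (2 * n).+1 = n + n.+1)%N; last by lia.
rewrite big_split_ord /= big1 ?add0n.
  apply: eq_bigr => i _ /=.
  by rewrite (_ : ((n + i)%:Z - n%:Z)%R = i%:Z) ?asb_Jint //; lia.
move=> i _; rewrite asboolF // => -[h _]; move: h; have := ltn_ord i; lia.
Qed.

Lemma dens isZ J (I : RR) : 0 < I -> (forall n, I * n%:R <= (cnt J n)%:R) ->
  (forall e, 0 < e -> exists N, forall n, (N <= n)%N -> (cnt J n)%:R <= (I + e) * n%:R) ->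
  pos_density isZ (Jint J).
Proof.
move=> I0 Hlo Hup; split; first by move=> z [h _]; right.
case: isZ.
- exists (I / 2); split; last by rewrite mulf_neq0 // ?gt_eqF //.
  apply: epsN_cvg => e e0.
  have [N HN] := Hup e e0; have [t ht] := archi_nat (I / e).
  exists (maxn N t) => n hn; rewrite /density_seq sumT.
  have n0 : (0 : RR) < ((2 * n).+1)%:R by rewrite ltr0n.
  have hl := Hlo n.+1.
  have hu := HN n.+1 (leq_trans (leq_maxl _ _) (leqW hn)).
  have hten : I <= e * n%:R.
    have : I / e < n%:R.
      by apply: lt_le_trans ht _; rewrite ler_nat; apply: leq_trans hn; exact: leq_maxr.
    by rewrite ltr_pdivrMr // mulrC => /ltW.
  have hv1 : (cnt J n.+1)%:R / ((2 * n).+1)%:R <= I / 2 + e.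
    rewrite ler_pdivrMr // -[((2 * n).+1)%:R]natr1 natrM.
    rewrite -[(n.+1)%:R]natr1 in hu; nra.
  have hv2 : I / 2 <= (cnt J n.+1)%:R / ((2 * n).+1)%:R.
    rewrite ler_pdivlMr // -[((2 * n).+1)%:R]natr1 natrM.
    rewrite -[(n.+1)%:R]natr1 in hl; nra.
  exact: dist_le.
- exists I; split; last by rewrite gt_eqF.
  apply: epsN_cvg => e e0.
  have [N HN] := Hup e e0.
  exists N => n hn; rewrite /density_seq sumF.
  have n0 : (0 : RR) < (n.+1)%:R by rewrite ltr0n.
  have hl := Hlo n.+1.
  have hu := HN n.+1 (leqW hn).
  have hv1 : (cnt J n.+1)%:R / (n.+1)%:R <= I + e by rewrite ler_pdivrMr.
  have hv2 : I <= (cnt J n.+1)%:R / (n.+1)%:R by rewrite ler_pdivlMr.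
  exact: dist_le.
Qed.
Definition indN (Z : Type) (R : Z -> Z) (k : nat) (A : 'I_k -> set Z) (P : nat -> bool) : Prop :=
  forall (I : seq nat) (sigma : nat -> 'I_k), I != [::] -> all P I ->
    exists z, forall s, s \in I -> A (sigma s) (iter s R z).

Lemma mem_lt_sumn (I : seq nat) s : s \in I -> (s < (sumn I).+1)%N.
Proof.
elim: I => //= x I IH; rewrite in_cons => /orP [/eqP ->|/IH h]; first by rewrite ltnS leq_addr.
by apply: leq_trans h _; rewrite ltnS leq_addl.
Qed.

Lemma indN_good Z (R : Z -> Z) k (A : 'I_k -> set Z) : goodOk (indN R A).
Proof.
split.
- move=> P Q OP H I sg In0 aQ; apply: OP In0 _; apply/allP => s /(allP aQ); exact: H.
- move=> P b OP I sg In0 aP.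
  have hn : map (addn b) I != [::] by case: I In0 aP.
  have ha : all P (map (addn b) I) by rewrite all_map.
  have [z Hz] := OP _ (fun t => sg (t - b)%N) hn ha.
  exists (iter b R z) => s sI; have := Hz (b + s)%N (map_f _ sI).
  by rewrite addKn -iterD addnC.
- move=> P H I sg In0 aP.
  apply: (H (sumn I).+1) In0 _; apply/allP => s sI.
  by rewrite (allP aP s sI) /= mem_lt_sumn.
Qed.

Lemma iter_pair X Y (T : X -> X) (S : Y -> Y) n p :
  iter n (fun p : X * Y => (T p.1, S p.2)) p = (iter n T p.1, iter n S p.2).
Proof. by elim: n => [|n IH] /=; [case: p | rewrite IH]. Qed.

Lemma iter_can Z (f g : Z -> Z) n x : cancel f g -> iter n g (iter n f x) = x.
Proof.
move=> fK; elim: n => //= n IH.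
by rewrite -iterS iterSr fK.
Qed.

Lemma dense_prod X Y (T : X -> X) (S : Y -> Y) k (U : 'I_k -> set X)
  (V : 'I_k -> set Y) (W : 'I_k -> set (X * Y)) :
  (forall i, U i `*` V i `<=` W i) -> Dense (indN T U) -> Dense (indN S V) ->
  Dense (indN (fun p : X * Y => (T p.1, S p.2)) W).
Proof.
move=> UVW [d1 [m1 [d10 H1]]] [d2 [m2 [d20 H2]]].
exists (2 * d1 * d2)%N, (m1 + m2).+1; split; first by rewrite !muln_gt0 d10 d20.
move=> m hm.
have [F [OF [FF cF]]] := H1 m (ltac:(lia)).
pose M := (2 * d2 * m)%N.
have [Q [OQ [_ cQ]]] := H2 M (ltac:(rewrite /M; nia)).
have cQ' : (2 * m <= cnt Q M)%N.
  by move: cQ; rewrite /M (mulnC 2) -mulnA leq_pmul2l.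
pose Rb b := fun i => F i && Q (b + i)%N.
have sumb : (cnt F m * m <= \sum_(b < M) cnt (Rb b) m)%N.
  rewrite /cnt /Rb exchange_big /= big_distrl /=.
  apply: leq_sum => i _.
  case Fi: (F i) => /=; last by rewrite mul0n.
  rewrite mul1n.
  rewrite (_ : \sum_(b < M) _ = cnt (fun b => Q (i + b)%N) M); last first.
    by apply: eq_bigr => b _; rewrite addnC.
  have h1 := cnt_split Q i M.
  have h2 : (cnt Q M <= cnt Q (i + M))%N := cnt_mono _ (leq_addl _ _).
  have h3 := cnt_le Q i.
  have h4 : (i < m)%N := ltn_ord i.
  lia.
have [b [bM hb]] : exists b, (b < M)%N /\ (cnt F m * m <= M * cnt (Rb b) m)%N.
  case: (EM (exists b, (b < M)%N /\ (cnt F m * m <= M * cnt (Rb b) m)%N)) => // /forallNP Hn.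
  exfalso.
  have : (\sum_(b < M) (M * cnt (Rb b) m + 1) <= \sum_(b < M) (cnt F m * m))%N.
    apply: leq_sum => b _; rewrite addn1 ltnNge; apply/negP => h; apply: (Hn b); split => //.
  rewrite big_split /= -big_distrr /= !sum_nat_const card_ord.
  have M0 : (0 < M)%N by rewrite /M; nia.
  move: sumb; set s := (\sum_(b < M) cnt (Rb b) m)%N; nia.
exists (Rb b); split; last split.
- move=> I sg In0 aR.
  have aF : all F I by apply/allP => s /(allP aR) /andP [].
  have aQ : all (fun i => Q (b + i)%N) I by apply/allP => s /(allP aR) /andP [].
  have [x Hx] := OF I sg In0 aF.
  have [_ Hsh _] := indN_good S V.
  have [y Hy] := Hsh Q b OQ I sg In0 aQ.
  exists (x, y) => s sI; rewrite iter_pair; apply: UVW; split; [exact: Hx | exact: Hy].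
- by move=> i /andP [/FF].
- have m0 : (0 < m)%N by lia.
  have hb' : (cnt F m <= 2 * d2 * cnt (Rb b) m)%N.
    by rewrite -(@leq_pmul2r m) //; move: hb; rewrite /M; nia.
  have := leq_mul (leqnn d1) hb'; nia.
Qed.
Lemma indep_Jint isZ Z (R : Z -> Z) k (A : 'I_k -> set Z) J :
  indN R A J -> indep_set isZ R A (Jint J).
Proof.
move=> HJ; split; first by move=> z [h _]; right.
move=> I sg In0 sub'.
have sub s : s \in I -> Jint J s by move=> /sub'; rewrite inE.
have hn : map absz I != [::] by case: I In0 sub sub'.
have ha : all J (map absz I) by apply/allP => t /mapP [s sI ->]; exact: (sub s sI).2.
have [z Hz] := HJ _ (fun t => sg t%:Z) hn ha.
exists z => s sI; have [s0 _] := sub s sI.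
rewrite /preim_pow s0; move: (Hz _ (map_f absz sI)) => /=.
by rewrite gez0_abs.
Qed.

Lemma half_norm (l x : RR) : 0 <= x -> `|l - x| <= `|l| / 2 -> `|l| / 2 <= x.
Proof.
move=> x0 h; have := ler_normD (l - x) x; rewrite subrK (ger0_norm x0) => h2.
lra.
Qed.

Lemma dense_of_IE isZ (Z : topologicalType) (R : Z -> Z) k (U : 'I_k -> set Z) J :
  system isZ R -> indep_set isZ R U J -> pos_density isZ J -> Dense (indN R U).
Proof.
move=> [_ _ _ _ Hinv] [JG Hind] [_ [l [Hl l0]]].
have al : 0 < `|l| by rewrite normr_gt0.
set c := `|l| / 2.
have c0 : 0 < c by rewrite divr_gt0.
have := proj1 (@cvgrPdist_le _ (RR^o) _ _ _ _ _) Hl c c0.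
case=> N _ HN.
have Hd n : (N <= n)%N -> c <= density_seq isZ J n.
  move=> nN; apply: half_norm; last exact: HN.
  rewrite /density_seq; case: isZ {Hinv JG Hind Hl HN}; exact: divr_ge0.
case: isZ Hinv JG Hind Hl HN Hd => Hinv JG Hind Hl HN Hd.
-
  have [Rinv [RK RiK _]] := Hinv isT.
  have [t ht] := archi_nat (2 / c).
  exists t, (2 * N).+2; split.
    by rewrite -(ltr_nat RR); apply: le_lt_trans ht; rewrite divr_ge0 // ltW.
  move=> m hm.
  pose n := ((m.-1) %/ 2)%N.
  have nN : (N <= n)%N by rewrite /n; lia.
  have hm1 : (m <= 2 * (2 * n).+1)%N by rewrite /n; lia.
  have hm2 : ((2 * n).+1 <= m)%N by rewrite /n; lia.
  pose P := fun i => ((i < (2 * n).+1)%N && `[< J ((i%:Z - n%:Z)%R) >]).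
  exists P; split; last split.
  + move=> I sg In0 aP.
    have hn : map (fun i => (i%:Z - n%:Z)%R) I != [::] by case: I In0 aP.
    have hs : {subset map (fun i => (i%:Z - n%:Z)%R) I <= J}.
      by move=> s /mapP [i iI ->]; rewrite inE; have /andP [_ /asboolP] := allP aP i iI.
    have [z0 Hz0] := Hind _ (fun s => sg (absz (s + n%:Z)%R)) hn hs.
    exists (iter n Rinv z0) => i iI.
    move: (Hz0 _ (map_f (fun i => (i%:Z - n%:Z)%R) iI)) => /=.
    rewrite (_ : absz (i%:Z - n%:Z + n%:Z)%R = i); last by lia.
    rewrite /preim_pow; case: ifP => hi.
    * rewrite /= (_ : absz (i%:Z - n%:Z)%R = (i - n)%N); last by lia.
      have hle : (n <= i)%N by move: hi; lia.
      have -> : iter i R (iter n Rinv z0) = iter (i - n) R z0.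
        by rewrite -{1}(subnK hle) iterD iter_can.
      by [].
    * case=> a Aa <-.
      rewrite (_ : absz (i%:Z - n%:Z)%R = (n - i)%N); last by move: hi; lia.
      have hle : (i <= n)%N by move: hi; lia.
      have -> : iter n Rinv (iter (n - i) R a) = iter i Rinv a.
        by rewrite -{1}(subnKC hle) iterD iter_can.
      by rewrite iter_can.
  + by move=> i /andP [h _]; apply: leq_trans h hm2.
  + have hc : (cnt P (2 * n).+1 <= cnt P m)%N := cnt_mono _ hm2.
    have eqs : cnt P (2 * n).+1 = (\sum_(i < (2 * n).+1) (`[< J ((i%:Z - n%:Z)%R) >] : nat))%N.
      by apply: eq_bigr => i _; rewrite /P ltn_ord.
    have := Hd n nN; rewrite /density_seq -eqs ler_pdivlMr ?ltr0n // => h.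
    rewrite -(ler_nat RR) natrM.
    have hm1' : (m%:R <= 2 * ((2 * n).+1)%:R :> RR) by rewrite -natrM ler_nat.
    have hc' : ((cnt P (2 * n).+1)%:R <= (cnt P m)%:R :> RR) by rewrite ler_nat.
    have ht' : 2 < t%:R * c by rewrite -ltr_pdivrMr.
    set s := (cnt P (2 * n).+1)%:R in h hc'; set q := ((2 * n).+1)%:R in h hm1'.
    have s0 : 0 <= s by rewrite ler0n.
    nra.
-
  have [t ht] := archi_nat (1 / c).
  exists t, N.+1; split.
    by rewrite -(ltr_nat RR); apply: le_lt_trans ht; rewrite divr_ge0 // ltW.
  move=> m hm.
  pose P := fun i => ((i < m)%N && `[< J i%:Z >]).
  exists P; split; last split.
  + move=> I sg In0 aP.
    have hn : map Posz I != [::] by case: I In0 aP.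
    have hs : {subset map Posz I <= J}.
      by move=> s /mapP [i iI ->]; rewrite inE; have /andP [_ /asboolP] := allP aP i iI.
    have [z0 Hz0] := Hind _ (fun s => sg (absz s)) hn hs.
    exists z0 => i iI.
    by move: (Hz0 _ (map_f Posz iI)).
  + by move=> i /andP [].
  + have eqs : cnt P m = (\sum_(i < m.-1.+1) (`[< J i%:Z >] : nat))%N.
      have -> : m.-1.+1 = m by lia.
      by apply: eq_bigr => i _; rewrite /P ltn_ord.
    have := Hd m.-1 (ltac:(lia)); rewrite /density_seq -eqs ler_pdivlMr ?ltr0n // => h.
    rewrite (_ : m.-1.+1 = m) in h; last by lia.
    rewrite -(ler_nat RR) natrM.
    have ht' : 1 < t%:R * c by rewrite -ltr_pdivrMr.
    set s := (cnt P m)%:R in h *.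
    have s0 : 0 <= s by rewrite ler0n.
    nra.
Qed.
Local Close Scope ring_scope.

Theorem theorem3p15 (isZ : bool) (X Y : topologicalType)
  (T : X -> X) (S : Y -> Y) (k : nat) :
  system isZ T -> system isZ S ->
  IE isZ (fun p : X * Y => (T p.1, S p.2)) k =
  [set z : 'I_k -> X * Y | IE isZ T k (fun i => (z i).1) /\
                           IE isZ S k (fun i => (z i).2)].
Proof.
move=> sysT sysS.
apply/seteqP; split => z.
- move=> Hz; split.
  + move=> U hU.
    have [J [[JG HJ] Jd]] := Hz (fun i => U i `*` setT) (fun i => ltac:(
      exists (U i, setT); [split => //; exact: filterT | by []])).
    exists J; split => //; split => // I sg In0 sub.
    have [p Hp] := HJ I sg In0 sub; exists p.1 => s sI; move: (Hp s sI).
    rewrite /preim_pow; case: ifP => _ /=.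
      by rewrite iter_pair => -[].
    by case=> q [qU _] <-; rewrite iter_pair; exists q.1.
  + move=> V hV.
    have [J [[JG HJ] Jd]] := Hz (fun i => setT `*` V i) (fun i => ltac:(
      exists (setT, V i); [split => //; exact: filterT | by []])).
    exists J; split => //; split => // I sg In0 sub.
    have [p Hp] := HJ I sg In0 sub; exists p.2 => s sI; move: (Hp s sI).
    rewrite /preim_pow; case: ifP => _ /=.
      by rewrite iter_pair => -[].
    by case=> q [_ qV] <-; rewrite iter_pair; exists q.2.
- move=> [HX HY] W hW.
  have hUV i : exists p : set X * set Y,
      [/\ nbhs (z i).1 p.1, nbhs (z i).2 p.2 & p.1 `*` p.2 `<=` W i].
    by case: (hW i) => p [h1 h2] h3; exists p.
  have [f Hf] := choice hUV.
  have H1 i : nbhs (z i).1 (f i).1 by case: (Hf i).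
  have H2 i : nbhs (z i).2 (f i).2 by case: (Hf i).
  have H3 i : (f i).1 `*` (f i).2 `<=` W i by case: (Hf i).
  have [J1 [I1 d1]] := HX (fun i => (f i).1) H1.
  have [J2 [I2 d2]] := HY (fun i => (f i).2) H2.
  have D1 := dense_of_IE sysT I1 d1.
  have D2 := dense_of_IE sysS I2 d2.
  have D := dense_prod H3 D1 D2.
  have [J [OJ [I [I0 [Hlo Hup]]]]] := core (indN_good _ _) D.
  exists (Jint J); split; [exact: indep_Jint | exact: dens I0 Hlo Hup].
Qed.
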